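(* Let $2<\gamma<3$ and let $k=k(n)$ satisfy $k=o(n)$. Then, as $n\to\infty$, \[h_n-\sum_{i=k}^{n-1}\left(\frac{i/n}{1-i/n}-\log\left(1+\frac{i/n}{1-i/n}\right)\right)\left(\frac ni\right)^{\gamma}\cdot\frac1n=\sum_{i=1}^{\infty}\left(\frac1i-\frac{i}{(i+1)(i+2-\gamma)}\right)+o(1),\] where $h_n=\sum_{j=1}^n 1/j$. *)

(* Defs.v *)
From Stdlib Require Import Reals.
From Coquelicot Require Import Coquelicot.
Open Scope R_scope.

Definition harmonic (n : nat) : R := sum_n_m (fun j => / INR j) 1 n.

Definition phi (x : R) : R := x / (1 - x) - ln (1 + x / (1 - x)).

Definition tail_sum (gamma : R) (k n : nat) : R :=
  sum_n_m (fun i => phi (INR i / INR n) * Rpower (INR n / INR i) gamma * / INR n)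
          k (n - 1).

Definition limit_term (gamma : R) (i : nat) : R :=
  / INR i - INR i / ((INR i + 1) * (INR i + 2 - gamma)).

(* Main.v *)
Require Import Defs.
From Stdlib Require Import Reals Lra Lia.
From Coquelicot Require Import Coquelicot.
Open Scope R_scope.

Ltac Req := match goal with |- @eq _ ?a ?b => change (@eq R a b) end.

Lemma Rpower_pos x e : 0 < Rpower x e.
Proof. unfold Rpower; apply exp_pos. Qed.

Lemma Rpower_1_base e : Rpower 1 e = 1.
Proof. unfold Rpower; rewrite ln_1, Rmult_0_r; apply exp_0. Qed.

Lemma rpow_anti e a b : e <= 0 -> 0 < a <= b -> Rpower b e <= Rpower a e.
Proof.
  intros He Hab.
  replace e with (- (- e)) by ring.
  rewrite (Rpower_Ropp b (-e)), (Rpower_Ropp a (-e)).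
  apply Rinv_le_contravar. apply Rpower_pos.
  apply Rle_Rpower_l; lra.
Qed.

Lemma is_series_R a l : is_series a l <-> is_lim_seq (sum_n a) l.
Proof. split; intro H; exact H. Qed.

Lemma rp_step_ge1 c u v : 1 <= c -> 0 < u <= v ->
  c * Rpower u (c-1) * (v-u) <= Rpower v c - Rpower u c <= c * Rpower v (c-1) * (v-u).
Proof.
  intros Hc Huv.
  destruct (Req_dec u v) as [E|E].
  { subst. lra. }
  destruct (MVT_cor2 (fun x => Rpower x c) (fun x => c * Rpower x (c-1)) u v) as [xi [Hxi Hr]].
  lra. intros t Ht. apply derivable_pt_lim_power. lra.
  rewrite Hxi.
  assert (Rpower u (c-1) <= Rpower xi (c-1)) by (apply Rle_Rpower_l; lra).
  assert (Rpower xi (c-1) <= Rpower v (c-1)) by (apply Rle_Rpower_l; lra).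
  split; apply Rmult_le_compat_r; try lra; apply Rmult_le_compat_l; lra.
Qed.

Lemma rp_step_le1 c u v : 0 < c <= 1 -> 0 < u <= v ->
  c * Rpower v (c-1) * (v-u) <= Rpower v c - Rpower u c <= c * Rpower u (c-1) * (v-u).
Proof.
  intros Hc Huv.
  destruct (Req_dec u v) as [E|E].
  { subst. lra. }
  destruct (MVT_cor2 (fun x => Rpower x c) (fun x => c * Rpower x (c-1)) u v) as [xi [Hxi Hr]].
  lra. intros t Ht. apply derivable_pt_lim_power. lra.
  rewrite Hxi.
  assert (Rpower xi (c-1) <= Rpower u (c-1)) by (apply rpow_anti; lra).
  assert (Rpower v (c-1) <= Rpower xi (c-1)) by (apply rpow_anti; lra).
  split; apply Rmult_le_compat_r; try lra; apply Rmult_le_compat_l; lra.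
Qed.

Lemma sum_zero_lt (f : nat -> R) a b : (b < a)%nat -> sum_n_m f a b = 0.
Proof. intro H. rewrite sum_n_m_zero by lia. reflexivity. Qed.

Lemma sum_le_loc (f g : nat -> R) a b :
  (forall j, (a <= j <= b)%nat -> f j <= g j) -> sum_n_m f a b <= sum_n_m g a b.
Proof.
  induction b as [|b IH]; intro H.
  - destruct a. rewrite !sum_n_n. apply H; lia.
    rewrite !sum_zero_lt by lia. lra.
  - destruct (Compare_dec.le_lt_dec a (S b)).
    + rewrite !sum_n_Sm by lia. apply Rplus_le_compat.
      apply IH. intros j Hj; apply H; lia. apply H; lia.
    + rewrite !sum_zero_lt by lia. lra.
Qed.

Lemma sum_ext_loc (f g : nat -> R) a b :
  (forall j, (a <= j <= b)%nat -> f j = g j) -> sum_n_m f a b = sum_n_m g a b.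
Proof. intro H. apply sum_n_m_ext_loc. exact H. Qed.

Lemma sum_nonneg (f : nat -> R) a b :
  (forall j, (a <= j <= b)%nat -> 0 <= f j) -> 0 <= sum_n_m f a b.
Proof.
  intro H. assert (E : sum_n_m (fun _ => 0) a b = 0).
  { rewrite sum_n_m_const. apply Rmult_0_r. }
  rewrite <- E. apply sum_le_loc. exact H.
Qed.

Lemma sum_plus (f g : nat -> R) a b :
  sum_n_m (fun j => f j + g j) a b = sum_n_m f a b + sum_n_m g a b.
Proof. exact (sum_n_m_plus f g a b). Qed.

Lemma sum_scal (c : R) (f : nat -> R) a b :
  sum_n_m (fun j => c * f j) a b = c * sum_n_m f a b.
Proof. exact (sum_n_m_mult_l c f a b). Qed.

Lemma sum_scal_r (c : R) (f : nat -> R) a b :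
  sum_n_m (fun j => f j * c) a b = sum_n_m f a b * c.
Proof.
  rewrite Rmult_comm, <- sum_scal. apply sum_n_m_ext; intros; simpl; ring.
Qed.

Lemma sum_minus (f g : nat -> R) a b :
  sum_n_m (fun j => f j - g j) a b = sum_n_m f a b - sum_n_m g a b.
Proof.
  unfold Rminus. rewrite sum_plus.
  replace (- sum_n_m g a b) with (-1 * sum_n_m g a b) by ring.
  rewrite <- sum_scal. f_equal. apply sum_n_m_ext; intros; simpl; ring.
Qed.

Lemma sum_tele (g : nat -> R) a b : (a <= S b)%nat ->
  sum_n_m (fun j => g (S j) - g j) a b = g (S b) - g a.
Proof.
  induction b as [|b IH]; intro H.
  - destruct a. rewrite sum_n_n. reflexivity.
    assert (a = 0)%nat by lia. subst. rewrite sum_zero_lt by lia. lra.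
  - destruct (Nat.eq_dec a (S (S b))).
    + subst. rewrite sum_zero_lt by lia. lra.
    + rewrite sum_n_Sm by lia. change (plus ?x ?y) with (x + y).
      rewrite IH by lia. simpl; ring.
Qed.


Lemma is_series_zero : is_series (fun _ : nat => 0) 0.
Proof.
  apply is_series_R. apply is_lim_seq_ext with (fun _ => 0).
  intro n. unfold sum_n. rewrite sum_n_m_const. symmetry; apply Rmult_0_r.
  apply is_lim_seq_const.
Qed.

Lemma series_sum (f : nat -> nat -> R) (F : nat -> R) a b :
  (forall j, (a <= j <= b)%nat -> is_series (f j) (F j)) ->
  is_series (fun m => sum_n_m (fun j => f j m) a b) (sum_n_m F a b).
Proof.
  induction b as [|b IH]; intro H.
  - destruct a.
    + rewrite sum_n_n. apply is_series_ext with (f 0%nat).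
      intro m; rewrite sum_n_n; reflexivity. apply H; lia.
    + rewrite sum_zero_lt by lia. apply is_series_ext with (fun _ => 0).
      intro m; rewrite sum_zero_lt by lia; reflexivity. apply is_series_zero.
  - destruct (Compare_dec.le_lt_dec a (S b)).
    + rewrite sum_n_Sm by lia.
      apply is_series_ext with (fun m => plus (sum_n_m (fun j => f j m) a b) (f (S b) m)).
      intro m; rewrite sum_n_Sm by lia; reflexivity.
      assert (IH' := IH (fun j Hj => H j ltac:(lia))).
      assert (H' := H (S b) ltac:(lia)).
      exact (is_series_plus _ _ _ _ IH' H').
    + rewrite sum_zero_lt by lia. apply is_series_ext with (fun _ => 0).
      intro m; rewrite sum_zero_lt by lia; reflexivity. apply is_series_zero.
Qed.

Definition RSf (h : R -> R) (k n : nat) : R :=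
  sum_n_m (fun j => h (INR j / INR n) * / INR n) k (n - 1).

Lemma tele_shift h k n : (1 <= n)%nat -> (k <= n)%nat ->
  sum_n_m (fun j => h (INR (S j) / INR n) * / INR n) k (n - 1)
  = RSf h k n + (h 1 - h (INR k / INR n)) * / INR n.
Proof.
  intros Hn Hk. unfold RSf.
  set (g := fun j : nat => h (INR j / INR n) * / INR n).
  transitivity (sum_n_m (fun j => g j + (g (S j) - g j)) k (n - 1)).
  { apply sum_n_m_ext; intro j; unfold g; simpl; ring. }
  rewrite sum_plus, sum_tele by lia.
  replace (S (n - 1)) with n by lia. unfold g.
  assert (INR n <> 0) by (apply not_0_INR; lia).
  replace (INR n / INR n) with 1 by (field; auto). Req; ring.
Qed.

Lemma RS_bounds c k n : 0 < c -> (1 <= k)%nat -> (k <= n - 1)%nat ->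
  let y := INR k / INR n in
  let SS := RSf (fun x => Rpower x (c - 1)) k n in
  (1 - Rpower y c) / c - / INR n <= SS /\
  SS <= (1 - Rpower y c) / c + Rpower y (c - 1) * / INR n /\
  SS <= / c.
Proof.
  intros Hc Hk Hkn y SS.
  assert (Hn0 : (0 < INR n)) by (apply lt_0_INR; lia).
  assert (Hy0 : 0 < y) by (unfold y; apply Rdiv_lt_0_compat; [apply lt_0_INR; lia | lra]).
  assert (Hy1 : y <= 1).
  { unfold y. apply Rmult_le_reg_r with (INR n); auto.
    field_simplify; try lra. apply le_INR; lia. }
  assert (Hyn : / INR n <= y).
  { unfold y. unfold Rdiv. rewrite <- (Rmult_1_l (/ INR n)) at 1.
    apply Rmult_le_compat_r. left; apply Rinv_0_lt_compat; auto.
    change 1 with (INR 1). apply le_INR; lia. }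
  set (g := fun j : nat => Rpower (INR j / INR n) c).
  assert (Htel : sum_n_m (fun j => g (S j) - g j) k (n - 1) = 1 - Rpower y c).
  { rewrite sum_tele by lia. replace (S (n - 1)) with n by lia. unfold g, y.
    replace (INR n / INR n) with 1 by (field; lra). rewrite Rpower_1_base. Req; ring. }
  assert (Hsh := tele_shift (fun x => Rpower x (c - 1)) k n ltac:(lia) ltac:(lia)).
  cbv beta in Hsh. rewrite Rpower_1_base in Hsh. fold y in Hsh.
  set (V := sum_n_m (fun j => Rpower (INR (S j) / INR n) (c - 1) * / INR n) k (n - 1)) in Hsh.
  fold SS in Hsh.
  assert (Hpos : 0 < Rpower y (c - 1)) by apply Rpower_pos.
  assert (Hstep : forall j, (k <= j <= n - 1)%nat ->
     0 < INR j / INR n /\ INR (S j) / INR n - INR j / INR n = / INR n).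
  { intros j Hj. split. apply Rdiv_lt_0_compat; [apply lt_0_INR; lia | lra].
    rewrite S_INR. field. lra. }
  assert (HU : sum_n_m (fun j => c * (Rpower (INR j / INR n) (c - 1) * / INR n)) k (n - 1)
             = c * SS) by (rewrite sum_scal; reflexivity).
  assert (HV : sum_n_m (fun j => c * (Rpower (INR (S j) / INR n) (c - 1) * / INR n)) k (n - 1)
             = c * V) by (rewrite sum_scal; reflexivity).
  destruct (Rle_or_lt 1 c) as [H1|H1].
  -
    assert (A1 : c * SS <= 1 - Rpower y c).
    { rewrite <- HU, <- Htel. apply sum_le_loc. intros j Hj.
      destruct (Hstep j Hj) as [P1 P2]. unfold g.
      destruct (rp_step_ge1 c (INR j / INR n) (INR (S j) / INR n) H1) as [B1 B2].
      split; auto. rewrite S_INR. unfold Rdiv. apply Rmult_le_compat_r. left; apply Rinv_0_lt_compat; lra. lra.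
      rewrite P2 in B1. lra. }
    assert (A2 : 1 - Rpower y c <= c * V).
    { rewrite <- HV, <- Htel. apply sum_le_loc. intros j Hj.
      destruct (Hstep j Hj) as [P1 P2]. unfold g.
      destruct (rp_step_ge1 c (INR j / INR n) (INR (S j) / INR n) H1) as [B1 B2].
      split; auto. rewrite S_INR. unfold Rdiv. apply Rmult_le_compat_r. left; apply Rinv_0_lt_compat; lra. lra.
      rewrite P2 in B2. lra. }
    assert (0 < / INR n) by (apply Rinv_0_lt_compat; lra).
    assert (0 < Rpower y c) by apply Rpower_pos.
    assert (Rpower y (c-1) <= 1).
    { apply Rle_trans with (Rpower 1 (c-1)); [apply Rle_Rpower_l; lra | rewrite Rpower_1_base; lra]. }
    assert (SS <= (1 - Rpower y c) / c).
    { apply Rmult_le_reg_l with c; [lra|]. field_simplify; lra. }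
    assert ((1 - Rpower y c) / c <= V).
    { apply Rmult_le_reg_l with c; [lra|]. field_simplify; lra. }
    split; [|split].
    + assert ((1 - Rpower y (c - 1)) * / INR n <= / INR n).
      { rewrite <- (Rmult_1_l (/ INR n)) at 2. apply Rmult_le_compat_r; lra. }
      lra.
    + assert (0 <= Rpower y (c - 1) * / INR n) by (apply Rmult_le_pos; lra). lra.
    + assert ((1 - Rpower y c) / c <= / c).
      { apply Rmult_le_reg_l with c; [lra|]. field_simplify; lra. }
      lra.
  -
    assert (H1' : 0 < c <= 1) by lra.
    assert (A1 : 1 - Rpower y c <= c * SS).
    { rewrite <- HU, <- Htel. apply sum_le_loc. intros j Hj.
      destruct (Hstep j Hj) as [P1 P2]. unfold g.
      destruct (rp_step_le1 c (INR j / INR n) (INR (S j) / INR n) H1') as [B1 B2].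
      split; auto. rewrite S_INR. unfold Rdiv. apply Rmult_le_compat_r. left; apply Rinv_0_lt_compat; lra. lra.
      rewrite P2 in B2. lra. }
    assert (A2 : c * V <= 1 - Rpower y c).
    { rewrite <- HV, <- Htel. apply sum_le_loc. intros j Hj.
      destruct (Hstep j Hj) as [P1 P2]. unfold g.
      destruct (rp_step_le1 c (INR j / INR n) (INR (S j) / INR n) H1') as [B1 B2].
      split; auto. rewrite S_INR. unfold Rdiv. apply Rmult_le_compat_r. left; apply Rinv_0_lt_compat; lra. lra.
      rewrite P2 in B1. lra. }
    assert (0 < / INR n) by (apply Rinv_0_lt_compat; lra).
    assert (0 < Rpower y c) by apply Rpower_pos.
    assert ((1 - Rpower y c) / c <= SS).
    { apply Rmult_le_reg_l with c; [lra|]. field_simplify; lra. }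
    assert (V <= (1 - Rpower y c) / c).
    { apply Rmult_le_reg_l with c; [lra|]. field_simplify; lra. }
    assert (E1 : SS = V - (1 - Rpower y (c - 1)) * / INR n) by lra.
    assert (0 <= Rpower y (c - 1) * / INR n) by (apply Rmult_le_pos; lra).
    split; [|split].
    + lra.
    + lra.
    + assert (Hyc : Rpower y c = Rpower y (c - 1) * y).
      { replace c with ((c - 1) + 1) at 1 by ring. rewrite Rpower_plus, Rpower_1; auto. }
      assert (Rpower y (c - 1) * / INR n <= Rpower y c / c).
      { rewrite Hyc. unfold Rdiv. rewrite Rmult_assoc.
        apply Rmult_le_compat_l; [lra|].
        assert (1 <= / c).
        { rewrite <- Rinv_1. apply Rinv_le_contravar; lra. }
        assert (y <= y * / c).
        { rewrite <- (Rmult_1_r y) at 1. apply Rmult_le_compat_l; lra. }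
        lra. }
      assert ((1 - Rpower y c) / c + Rpower y c / c = / c) by (field; lra).
      lra.
Qed.

Lemma lim_inv_n : is_lim_seq (fun n => / INR n) 0.
Proof.
  replace (Finite 0) with (Rbar_inv p_infty) by reflexivity.
  apply is_lim_seq_inv. apply is_lim_seq_INR. discriminate.
Qed.

Lemma lim_rpow0 (y : nat -> R) c : 0 < c -> (forall n, (1 <= n)%nat -> 0 < y n) ->
  is_lim_seq y 0 -> is_lim_seq (fun n => Rpower (y n) c) 0.
Proof.
  intros Hc Hy Hl. apply is_lim_seq_spec. apply is_lim_seq_spec in Hl.
  intro eps. set (d := Rpower eps (/ c)).
  assert (Hd : 0 < d) by apply Rpower_pos.
  destruct (Hl (mkposreal d Hd)) as [N HN]. exists (S N). intros n Hn.
  specialize (HN n ltac:(lia)). specialize (Hy n ltac:(lia)). simpl in HN. rewrite Rminus_0_r in *.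
  rewrite Rabs_pos_eq in HN by lra.
  rewrite Rabs_pos_eq by (left; apply Rpower_pos).
  apply Rlt_le_trans with (Rpower d c).
  apply Rlt_Rpower_l; auto.
  unfold d. rewrite Rpower_mult. rewrite Rinv_l by lra. rewrite Rpower_1 by apply cond_pos. lra.
Qed.

Lemma ev_k (k : nat -> nat) : is_lim_seq (fun n => INR (k n) / INR n) 0 ->
  eventually (fun n => (2 * k n <= n)%nat).
Proof.
  intro Hl. apply is_lim_seq_spec in Hl.
  destruct (Hl (mkposreal (1/2) ltac:(lra))) as [N HN].
  exists (S N). intros n Hn. specialize (HN n ltac:(lia)). simpl in HN.
  rewrite Rminus_0_r in HN.
  assert (Hn0 : 0 < INR n) by (apply lt_0_INR; lia).
  assert (0 <= INR (k n) / INR n) by (apply Rmult_le_pos; [apply pos_INR| left; apply Rinv_0_lt_compat; lra]).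
  rewrite Rabs_pos_eq in HN by lra.
  assert (INR (k n) < INR n / 2).
  { apply Rmult_lt_reg_r with (/ INR n). apply Rinv_0_lt_compat; lra.
    replace (INR n / 2 * / INR n) with (1/2) by (field; lra). exact HN. }
  apply INR_le. rewrite mult_INR. simpl. lra.
Qed.

Lemma RS_lim c (k : nat -> nat) : 0 < c -> (forall n, (1 <= k n)%nat) ->
  is_lim_seq (fun n => INR (k n) / INR n) 0 ->
  is_lim_seq (fun n => RSf (fun x => Rpower x (c - 1)) (k n) n) (/ c).
Proof.
  intros Hc Hk Hl.
  apply is_lim_seq_le_le_loc with
    (u := fun n => (1 - Rpower (INR (k n) / INR n) c) / c - / INR n)
    (w := fun _ => / c).
  - destruct (ev_k k Hl) as [N HN]. exists N. intros n Hn.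
    specialize (HN n Hn). specialize (Hk n).
    destruct (RS_bounds c (k n) n Hc Hk ltac:(lia)) as [B1 [B2 B3]]. split; auto.
  - replace (Finite (/ c)) with (Finite ((1 - 0) / c - 0)) by (f_equal; field; lra).
    apply is_lim_seq_minus'. 2: apply lim_inv_n.
    unfold Rdiv. apply is_lim_seq_mult'. 2: apply is_lim_seq_const.
    apply is_lim_seq_minus'. apply is_lim_seq_const.
    apply lim_rpow0; auto.
    intros n Hn. apply Rdiv_lt_0_compat; apply lt_0_INR; [specialize (Hk n); lia| lia].
  - apply is_lim_seq_const.
Qed.

Lemma sum_n_mono (a : nat -> R) K d : (forall m, 0 <= a m) -> sum_n a K <= sum_n a (K + d).
Proof.
  intro H. induction d as [|d IH].
  - rewrite Nat.add_0_r. lra.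
  - rewrite Nat.add_succ_r, sum_Sn. change (plus ?x ?y) with (x + y).
    specialize (H (S (K + d))). lra.
Qed.

Lemma psum_le (a : nat -> R) l K : (forall m, 0 <= a m) -> is_series a l -> sum_n a K <= l.
Proof.
  intros H Hs. apply is_series_R in Hs.
  assert (Hc := is_lim_seq_const (sum_n a K)).
  assert (Rbar_le (sum_n a K) l).
  { apply is_lim_seq_le_loc with (fun _ => sum_n a K) (sum_n a); auto.
    exists K. intros n Hn. replace n with (K + (n - K))%nat by lia. apply sum_n_mono; auto. }
  exact H0.
Qed.

Lemma lim_sum_n (e : nat -> nat -> R) (el : nat -> R) K :
  (forall m, is_lim_seq (fun n => e n m) (el m)) ->
  is_lim_seq (fun n => sum_n (e n) K) (sum_n el K).
Proof.
  intro H. induction K as [|K IH].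
  - rewrite sum_O. apply is_lim_seq_ext with (fun n => e n 0%nat).
    intro n; rewrite sum_O; reflexivity. apply H.
  - rewrite sum_Sn. apply is_lim_seq_ext with (fun n => sum_n (e n) K + e n (S K)).
    intro n; rewrite sum_Sn; reflexivity.
    apply is_lim_seq_plus'; auto.
Qed.

Lemma tannery (e : nat -> nat -> R) (el : nat -> R) (E : nat -> R) :
  (forall n m, 0 <= e n m) ->
  (forall n, is_series (e n) (E n)) ->
  (forall m, is_lim_seq (fun n => e n m) (el m)) ->
  (forall eps, 0 < eps -> exists M, eventually (fun n => E n <= sum_n (e n) M + eps)) ->
  ex_series el /\ is_lim_seq E (Series el).
Proof.
  intros H0 HS HL HT.
  assert (Hel : forall m, 0 <= el m).
  { intro m. assert (Rbar_le 0 (el m)).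
    { apply is_lim_seq_le with (fun _ => 0) (fun n => e n m); auto.
      apply is_lim_seq_const. }
    exact H. }
  assert (HB : forall M eps, eventually (fun n => E n <= sum_n (e n) M + eps) ->
            forall K, sum_n el K <= sum_n el M + eps).
  { intros M eps [N HN] K.
    assert (Rbar_le (sum_n el K) (sum_n el M + eps)).
    { apply is_lim_seq_le_loc with (fun n => sum_n (e n) K) (fun n => sum_n (e n) M + eps).
      exists N. intros n Hn. apply Rle_trans with (E n); auto.
      apply psum_le; auto.
      apply lim_sum_n; auto.
      apply is_lim_seq_plus'. apply lim_sum_n; auto. apply is_lim_seq_const. }
    exact H. }
  assert (Hex : ex_series el).
  { destruct (HT 1 ltac:(lra)) as [M1 HM1].
    destruct (ex_finite_lim_seq_incr (sum_n el) (sum_n el M1 + 1)) as [l Hl].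
    intro n. rewrite sum_Sn. change (plus ?x ?y) with (x + y). specialize (Hel (S n)). lra.
    intro n. apply HB; auto.
    exists l. apply is_series_R. exact Hl. }
  split; auto.
  assert (HSc := Series_correct _ Hex). set (S := Series el) in *.
  apply is_lim_seq_spec. intro eps. assert (Hep0 := cond_pos eps).
  destruct (HT (eps / 4)) as [M HM]. { lra. }
  assert (Hs1 : sum_n el M <= S) by (apply psum_le; auto).
  assert (Hs2 : S <= sum_n el M + eps / 4).
  { assert (Rbar_le S (sum_n el M + eps / 4)).
    { apply is_lim_seq_le with (sum_n el) (fun _ => sum_n el M + eps / 4).
      intro K. apply HB; auto. apply is_series_R; auto. apply is_lim_seq_const. }
    exact H. }
  assert (HP := lim_sum_n e el M HL). apply is_lim_seq_spec in HP.
  destruct (HP (mkposreal (eps / 4) ltac:(lra))) as [N1 HN1].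
  destruct HM as [N2 HN2].
  exists (max N1 N2). intros n Hn.
  specialize (HN1 n ltac:(lia)). specialize (HN2 n ltac:(lia)). simpl in HN1.
  assert (sum_n (e n) M <= E n) by (apply psum_le; auto).
  assert (Hep := cond_pos eps).
  apply Rabs_def1; apply Rabs_def2 in HN1; lra.
Qed.

Definition a1 : nat -> R := fun _ => 1.

Lemma CV_a1 : CV_radius a1 = 1.
Proof.
  rewrite (CV_radius_finite_DAlembert a1 1).
  - f_equal. apply Rinv_1.
  - intro n; unfold a1; lra.
  - lra.
  - apply is_lim_seq_ext with (fun _ => 1). intro n; unfold a1.
    rewrite Rdiv_1_l, Rinv_1, Rabs_R1; reflexivity.
    apply is_lim_seq_const.
Qed.

Lemma PS_a1 t : Rabs t < 1 -> PSeries a1 t = / (1 - t).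
Proof.
  intro Ht. unfold PSeries. apply is_series_unique.
  apply is_series_ext with (fun n => t ^ n). intro n; unfold a1; Req; ring.
  apply is_series_geom; auto.
Qed.

Lemma ln_series x : 0 <= x < 1 ->
  is_series (fun m => x ^ (S m) / INR (S m)) (- ln (1 - x)).
Proof.
  intro Hx.
  set (F := PSeries (PS_Int a1)).
  assert (Hrad : forall t, Rabs t < 1 -> Rbar_lt (Rabs t) (CV_radius (PS_Int a1))).
  { intros t Ht. rewrite CV_radius_Int, CV_a1. exact Ht. }
  assert (HF : F x = - ln (1 - x)).
  { destruct (Req_dec x 0) as [E0|E0].
    - subst x. unfold F. rewrite PSeries_0. rewrite Rminus_0_r, ln_1. simpl. ring.
    - set (G := fun t => plus (F t) (ln (1 - t))).
      assert (HG : G 0 = G x).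
      { apply eq_is_derive; [|lra].
        intros t Ht.
        assert (Ht1 : Rabs t < 1) by (rewrite Rabs_pos_eq; lra).
        assert (D1 : is_derive F t (/ (1 - t))).
        { assert (D := is_derive_PSeries (PS_Int a1) t (Hrad t Ht1)).
          rewrite <- (PS_a1 t Ht1).
          replace (PSeries a1 t) with (PSeries (PS_derive (PS_Int a1)) t). exact D.
          apply Series_ext. intro n. unfold PS_derive, PS_Int, a1.
          field. apply not_0_INR; lia. }
        assert (D2 : is_derive (fun t => ln (1 - t)) t (- / (1 - t))).
        { auto_derive. lra. field. lra. }
        assert (D := is_derive_plus _ _ _ _ _ D1 D2).
        replace (@zero R_NormedModule) with (plus (/ (1 - t)) (- / (1 - t))).
        exact D.
        change (plus ?u ?v) with (u + v). rewrite Rplus_opp_r. reflexivity. }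
      unfold G in HG. rewrite Rminus_0_r, ln_1 in HG.
      unfold F in HG at 1. rewrite PSeries_0 in HG. simpl in HG.
      change (plus ?u ?v) with (u + v) in HG. lra. }
  assert (Hs : is_series (fun k => PS_Int a1 k * x ^ k) (F x)).
  { assert (Hx1 : Rabs x < 1) by (rewrite Rabs_pos_eq; lra).
    assert (E := PSeries_correct _ _ (CV_radius_inside _ _ (Hrad x Hx1))).
    apply is_series_ext with (2 := E). intro n. rewrite pow_n_pow.
    change (scal ?u ?v) with (u * v). Req; ring. }
  rewrite HF in Hs.
  apply is_series_ext with (fun m => PS_Int a1 (S m) * x ^ (S m)).
  { intro m. unfold PS_Int, a1. Req. unfold Rdiv. ring. }
  apply (is_series_incr_1 (fun k => PS_Int a1 k * x ^ k)).
  match goal with |- is_series _ ?l => replace l with (- ln (1 - x)) end. exact Hs.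
  unfold PS_Int. change (plus ?u ?v) with (u + v). Req; ring.
Qed.

Lemma is_series_eq (a b : nat -> R) (l l' : R) :
  (forall n, a n = b n) -> l = l' -> is_series a l -> is_series b l'.
Proof. intros H1 H2 H3. subst l'. exact (is_series_ext _ _ _ H1 H3). Qed.

Definition Aterm (b x : R) (m : nat) : R := Rpower x (INR m - b) / (INR m + 2).
Definition Bterm (b x : R) (m : nat) : R := Rpower x (INR m - b) - x ^ m.

Lemma Rpower_split x m b : 0 < x -> Rpower x (INR m - b) = Rpower x (- b) * x ^ m.
Proof.
  intro Hx. unfold Rminus. rewrite Rplus_comm, Rpower_plus, Rpower_pow; auto.
Qed.

Lemma SA_series b x : 0 < x < 1 ->
  is_series (Aterm b x) (Rpower x (- b) * (- ln (1 - x) - x) / x ^ 2).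
Proof.
  intro Hx.
  assert (H := ln_series x ltac:(lra)).
  assert (H2 : is_series (fun m => x ^ (S (S m)) / INR (S (S m))) (- ln (1 - x) - x)).
  { apply (is_series_incr_1 (fun m => x ^ (S m) / INR (S m))).
    match goal with |- is_series _ ?l => replace l with (- ln (1 - x)) end. exact H.
    change (plus ?u ?v) with (u + v). simpl. Req; field. }
  assert (H3 := is_series_scal (Rpower x (- b) / x ^ 2) _ _ H2).
  apply is_series_eq with (3 := H3).
  - intro m. change (scal ?u ?v) with (u * v). unfold Aterm.
    rewrite Rpower_split by lra. rewrite !S_INR.
    assert (0 <= INR m) by apply pos_INR.
    Req. simpl. field. split; lra.
  - change (scal ?u ?v) with (u * v). Req; field. lra.
Qed.

Lemma SB_series b x : 0 < x < 1 ->
  is_series (Bterm b x) (Rpower x (- b) / (1 - x) - / (1 - x)).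
Proof.
  intro Hx.
  assert (G : is_series (fun m => x ^ m) (/ (1 - x))).
  { apply is_series_geom. rewrite Rabs_pos_eq; lra. }
  assert (G1 := is_series_scal (Rpower x (- b)) _ _ G).
  assert (G2 := is_series_minus _ _ _ _ G1 G).
  apply is_series_eq with (3 := G2).
  - intro m. unfold Bterm. rewrite Rpower_split by lra.
    change (scal ?u ?v) with (u * v). change (plus ?u ?v) with (u + v). change (opp ?u) with (- u).
    Req; ring.
  - change (scal ?u ?v) with (u * v). change (plus ?u ?v) with (u + v). change (opp ?u) with (- u).
    Req; field. lra.
Qed.

Lemma key_identity b x : 0 < x < 1 ->
  / (1 - x) - phi x * Rpower (/ x) (b + 2)
  = Rpower x (- b) * (- ln (1 - x) - x) / x ^ 2 - (Rpower x (- b) / (1 - x) - / (1 - x)).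
Proof.
  intro Hx. unfold phi.
  replace (1 + x / (1 - x)) with (/ (1 - x)) by (field; lra).
  rewrite ln_Rinv by lra.
  assert (E : Rpower (/ x) (b + 2) = Rpower x (- b) / x ^ 2).
  { unfold Rpower at 1. rewrite ln_Rinv by lra.
    replace ((b + 2) * - ln x) with (- b * ln x + - (INR 2 * ln x)) by (simpl; ring).
    rewrite exp_plus. fold (Rpower x (- b)). rewrite exp_Ropp.
    fold (Rpower x (INR 2)). rewrite Rpower_pow by lra. reflexivity. }
  rewrite E. field. lra.
Qed.

Lemma nat_above (r : R) : exists N : nat, r < INR N.
Proof.
  assert (H := proj2 (is_lim_seq_spec INR p_infty) is_lim_seq_INR r).
  destruct H as [N HN]. exists N. apply HN. lia.
Qed.

Lemma is_series_le (a c : nat -> R) (la lc : R) :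
  (forall m, a m <= c m) -> is_series a la -> is_series c lc -> la <= lc.
Proof.
  intros H Ha Hc. apply is_series_R in Ha. apply is_series_R in Hc.
  assert (Rbar_le la lc).
  { apply is_lim_seq_le with (sum_n a) (sum_n c); auto.
    intro n. apply sum_le_loc. intros; auto. }
  exact H0.
Qed.

Lemma tail_eq (a : nat -> R) (l : R) M :
  is_series a l -> is_series (fun m => a (S M + m)%nat) (l - sum_n a M).
Proof.
  intro H. apply is_series_incr_n. lia.
  simpl. match goal with |- is_series _ ?l' => replace l' with l end. exact H.
  change (plus ?u ?v) with (u + v). unfold Rminus; rewrite Rplus_assoc, Rplus_opp_l, Rplus_0_r; reflexivity.
Qed.

Lemma tele_series (u : nat -> R) : is_lim_seq u 0 ->
  is_series (fun m => u m - u (S m)) (u 0%nat).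
Proof.
  intro H. apply is_series_R.
  apply is_lim_seq_ext with (fun n => u 0%nat - u (S n)).
  { intro n. unfold sum_n.
    transitivity (sum_n_m (fun j => (fun i => - u i) (S j) - (fun i => - u i) j) 0 n).
    rewrite (sum_tele (fun i => - u i)) by lia. Req; ring.
    apply sum_n_m_ext; intro j; Req; ring. }
  replace (Finite (u 0%nat)) with (Finite (u 0%nat - 0)) by (f_equal; ring).
  apply is_lim_seq_minus'. apply is_lim_seq_const.
  apply -> is_lim_seq_incr_1. exact H.
Qed.

Lemma harm_rev n : harmonic (S n) = sum_n_m (fun j => / INR (S n - j)) 0 n.
Proof.
  induction n as [|n IH].
  - unfold harmonic. rewrite !sum_n_n. reflexivity.
  - unfold harmonic in *. rewrite sum_n_Sm by lia. rewrite IH.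
    rewrite (sum_Sn_m _ 0 (S n)) by lia.
    rewrite <- sum_n_m_S. change (plus ?u ?v) with (u + v).
    replace (S (S n) - 0)%nat with (S (S n)) by lia.
    assert (E : sum_n_m (fun j => / INR (S (S n) - S j)) 0 n = sum_n_m (fun j => / INR (S n - j)) 0 n).
    { apply sum_n_m_ext; intro j. reflexivity. }
    rewrite E. replace (S n - 0)%nat with (S n) by lia. Req; ring.
Qed.

Definition SAv (b x : R) : R := Rpower x (- b) * (- ln (1 - x) - x) / x ^ 2.
Definition SBv (b x : R) : R := Rpower x (- b) / (1 - x) - / (1 - x).

Definition An (b : R) (k : nat -> nat) (n m : nat) : R :=
  sum_n_m (fun j => Aterm b (INR j / INR n) m * / INR n) (k n) (n - 1).
Definition Bn (b : R) (k : nat -> nat) (n m : nat) : R :=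
  sum_n_m (fun j => Bterm b (INR j / INR n) m * / INR n) (k n) (n - 1).
Definition EA (b : R) (k : nat -> nat) (n : nat) : R :=
  sum_n_m (fun j => SAv b (INR j / INR n) * / INR n) (k n) (n - 1).
Definition EB (b : R) (k : nat -> nat) (n : nat) : R :=
  sum_n_m (fun j => SBv b (INR j / INR n) * / INR n) (k n) (n - 1).

Lemma range_x (k : nat -> nat) n j : (1 <= k n)%nat -> (k n <= j <= n - 1)%nat ->
  0 < INR j / INR n < 1 /\ 0 < / INR n.
Proof.
  intros Hk Hj.
  assert (0 < INR n) by (apply lt_0_INR; lia).
  assert (0 < INR j) by (apply lt_0_INR; lia).
  assert (INR j < INR n) by (apply lt_INR; lia).
  split; [split|].
  - apply Rdiv_lt_0_compat; lra.
  - apply Rmult_lt_reg_r with (INR n); auto. field_simplify; lra.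
  - apply Rinv_0_lt_compat; lra.
Qed.

Lemma series_scal_r (a : nat -> R) (l c : R) : is_series a l -> is_series (fun m => a m * c) (l * c).
Proof.
  intro H. apply is_series_eq with (3 := is_series_scal c _ _ H).
  intro m. change (scal ?u ?v) with (u * v). Req; ring.
  change (scal ?u ?v) with (u * v). Req; ring.
Qed.

Lemma An_series b k n : (forall n, (1 <= k n)%nat) -> is_series (An b k n) (EA b k n).
Proof.
  intro Hk. unfold An, EA.
  apply (series_sum (fun j m => Aterm b (INR j / INR n) m * / INR n)).
  intros j Hj. destruct (range_x k n j (Hk n) Hj) as [Hx _].
  apply series_scal_r. apply SA_series; auto.
Qed.

Lemma Bn_series b k n : (forall n, (1 <= k n)%nat) -> is_series (Bn b k n) (EB b k n).
Proof.
  intro Hk. unfold Bn, EB.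
  apply (series_sum (fun j m => Bterm b (INR j / INR n) m * / INR n)).
  intros j Hj. destruct (range_x k n j (Hk n) Hj) as [Hx _].
  apply series_scal_r. apply SB_series; auto.
Qed.

Lemma An_nonneg b k n m : (forall n, (1 <= k n)%nat) -> 0 <= An b k n m.
Proof.
  intro Hk. apply sum_nonneg. intros j Hj.
  destruct (range_x k n j (Hk n) Hj) as [Hx Hn].
  unfold Aterm. apply Rmult_le_pos; [|lra].
  apply Rmult_le_pos. left; apply Rpower_pos.
  left; apply Rinv_0_lt_compat. assert (0 <= INR m) by apply pos_INR. lra.
Qed.

Lemma Bterm_nonneg b x m : 0 < b -> 0 < x < 1 -> 0 <= Bterm b x m.
Proof.
  intros Hb Hx. unfold Bterm. rewrite <- Rpower_pow by lra.
  unfold Rpower. assert (ln x < 0) by (rewrite <- ln_1; apply ln_increasing; lra).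
  assert (exp (INR m * ln x) <= exp ((INR m - b) * ln x)).
  { destruct (Req_dec (INR m * ln x) ((INR m - b) * ln x)) as [E|E]. rewrite E; lra.
    left. apply exp_increasing. nra. }
  lra.
Qed.

Lemma Bn_nonneg b k n m : 0 < b -> (forall n, (1 <= k n)%nat) -> 0 <= Bn b k n m.
Proof.
  intros Hb Hk. apply sum_nonneg. intros j Hj.
  destruct (range_x k n j (Hk n) Hj) as [Hx Hn].
  apply Rmult_le_pos; [|lra]. apply Bterm_nonneg; auto.
Qed.

Lemma RSf_ext_loc h h' k n : (1 <= k)%nat ->
  (forall x, 0 < x < 1 -> h x = h' x) -> RSf h k n = RSf h' k n.
Proof.
  intros Hk H. unfold RSf. apply sum_ext_loc. intros j Hj.
  destruct (range_x (fun _ => k) n j Hk Hj) as [Hx _]. rewrite H; auto.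
Qed.

Lemma An_RS b k n m : (forall n, (1 <= k n)%nat) ->
  An b k n m = RSf (fun x => Rpower x ((INR m + 1 - b) - 1)) (k n) n * / (INR m + 2).
Proof.
  intro Hk. unfold An, RSf. rewrite <- sum_scal_r. apply sum_n_m_ext. intro j.
  unfold Aterm. replace (INR m + 1 - b - 1) with (INR m - b) by ring. Req. unfold Rdiv. ring.
Qed.

Lemma Bn_RS b k n m : (forall n, (1 <= k n)%nat) ->
  Bn b k n m = RSf (fun x => Rpower x ((INR m + 1 - b) - 1)) (k n) n
             - RSf (fun x => Rpower x ((INR m + 1) - 1)) (k n) n.
Proof.
  intro Hk. unfold RSf. rewrite <- sum_minus. unfold Bn. apply sum_ext_loc. intros j Hj.
  destruct (range_x k n j (Hk n) Hj) as [Hx _].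
  unfold Bterm. replace (INR m + 1 - b - 1) with (INR m - b) by ring.
  replace (INR m + 1 - 1) with (INR m) by ring. rewrite Rpower_pow by lra. ring.
Qed.

Lemma An_lim b k m : 0 < b < 1 -> (forall n, (1 <= k n)%nat) ->
  is_lim_seq (fun n => INR (k n) / INR n) 0 ->
  is_lim_seq (fun n => An b k n m) (/ (INR m + 1 - b) * / (INR m + 2)).
Proof.
  intros Hb Hk Hl. assert (0 <= INR m) by apply pos_INR.
  apply is_lim_seq_ext with (fun n => RSf (fun x => Rpower x ((INR m + 1 - b) - 1)) (k n) n * / (INR m + 2)).
  intro n; rewrite An_RS; auto.
  apply is_lim_seq_mult'. apply RS_lim; auto. lra. apply is_lim_seq_const.
Qed.

Lemma Bn_lim b k m : 0 < b < 1 -> (forall n, (1 <= k n)%nat) ->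
  is_lim_seq (fun n => INR (k n) / INR n) 0 ->
  is_lim_seq (fun n => Bn b k n m) (/ (INR m + 1 - b) - / (INR m + 1)).
Proof.
  intros Hb Hk Hl. assert (0 <= INR m) by apply pos_INR.
  apply is_lim_seq_ext with (fun n => RSf (fun x => Rpower x ((INR m + 1 - b) - 1)) (k n) n
             - RSf (fun x => Rpower x ((INR m + 1) - 1)) (k n) n).
  intro n; rewrite Bn_RS; auto.
  apply is_lim_seq_minus'; apply RS_lim; auto; lra.
Qed.

Lemma Al_tel m b : 0 < b < 1 ->
  / (INR m + 1 - b) * / (INR m + 2) <= / (INR m + 1 - b) - / (INR (S m) + 1 - b).
Proof.
  intro Hb. rewrite S_INR. assert (0 <= INR m) by apply pos_INR.
  replace (/ (INR m + 1 - b) - / (INR m + 1 + 1 - b)) with (/ ((INR m + 1 - b) * (INR m + 2 - b)))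
    by (field; lra).
  rewrite <- Rinv_mult. apply Rinv_le_contravar. apply Rmult_lt_0_compat; lra.
  apply Rmult_le_compat_l; lra.
Qed.

Lemma lim_u_shift b M : 0 < b < 1 ->
  is_lim_seq (fun m => / (INR (S M + m) + 1 - b)) 0.
Proof.
  intro Hb.
  apply is_lim_seq_le_le with (u := fun _ => 0) (w := fun m => / INR (S m)).
  - intro m. assert (INR (S m) <= INR (S M + m)) by (apply le_INR; lia).
    assert (0 < INR (S m)) by (apply lt_0_INR; lia).
    split. left; apply Rinv_0_lt_compat; lra.
    apply Rinv_le_contravar; lra.
  - apply is_lim_seq_const.
  - apply (is_lim_seq_incr_1 (fun n => / INR n)). apply lim_inv_n.
Qed.

Lemma A_tail b k : 0 < b < 1 -> (forall n, (1 <= k n)%nat) ->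
  is_lim_seq (fun n => INR (k n) / INR n) 0 ->
  forall eps, 0 < eps -> exists M, eventually (fun n => EA b k n <= sum_n (An b k n) M + eps).
Proof.
  intros Hb Hk Hl eps Heps.
  destruct (nat_above (/ eps)) as [M HM]. exists M.
  assert (Hinv : / (INR (S M) + 1 - b) <= eps).
  { rewrite S_INR. assert (0 < / eps) by (apply Rinv_0_lt_compat; lra).
    rewrite <- (Rinv_inv eps). apply Rinv_le_contravar; lra. }
  destruct (ev_k k Hl) as [N HN]. exists N. intros n Hn. specialize (HN n Hn).
  assert (Htail := tail_eq (An b k n) (EA b k n) M (An_series b k n Hk)).
  set (u := fun m : nat => / (INR m + 1 - b)).
  assert (Htel := tele_series (fun m => u (S M + m)%nat) (lim_u_shift b M Hb)).
  assert (Hle : EA b k n - sum_n (An b k n) M <= u (S M + 0)%nat).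
  { apply is_series_le with (3 := Htel) (2 := Htail). intro m. cbv beta.
    apply Rle_trans with (/ (INR (S M + m) + 1 - b) * / (INR (S M + m) + 2)).
    - rewrite An_RS by auto. apply Rmult_le_compat_r.
      left; apply Rinv_0_lt_compat. assert (0 <= INR (S M + m)) by apply pos_INR. lra.
      assert (0 <= INR (S M + m)) by apply pos_INR.
      destruct (RS_bounds (INR (S M + m) + 1 - b) (k n) n ltac:(lra) (Hk n) ltac:(lia)) as [_ [_ B3]].
      exact B3.
    - unfold u. replace (S M + S m)%nat with (S (S M + m)) by lia. apply Al_tel; auto. }
  unfold u in Hle. replace (S M + 0)%nat with (S M) in Hle by lia. lra.
Qed.

Lemma B_tail_series b x M : 0 < x < 1 ->
  is_series (fun m => Bterm b x (S M + m)) ((Rpower x (- b) - 1) * x ^ (S M) / (1 - x)).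
Proof.
  intro Hx.
  assert (G : is_series (fun m => x ^ m) (/ (1 - x))).
  { apply is_series_geom. rewrite Rabs_pos_eq; lra. }
  assert (G1 := is_series_scal ((Rpower x (- b) - 1) * x ^ (S M)) _ _ G).
  apply is_series_eq with (3 := G1).
  - intro m. change (scal ?u ?v) with (u * v). unfold Bterm.
    rewrite Rpower_split by lra. rewrite pow_add. Req; ring.
  - change (scal ?u ?v) with (u * v). Req; field. lra.
Qed.

Lemma B_tail_ineq b x M : 0 < b < 1 -> 0 < x < 1 ->
  (Rpower x (- b) - 1) * x ^ (S M) / (1 - x) <= b * Rpower x (INR M - b).
Proof.
  intros Hb Hx.
  destruct (rp_step_ge1 (1 + b) x 1 ltac:(lra) ltac:(lra)) as [_ H].
  replace (1 + b - 1) with b in H by ring.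
  rewrite !Rpower_1_base in H.
  rewrite Rpower_plus, Rpower_1 in H by lra.
  set (P := Rpower x (- b)) in *. set (Q := Rpower x b) in *.
  assert (HPQ : P * Q = 1).
  { unfold P, Q. rewrite <- Rpower_plus. replace (- b + b) with 0 by ring. apply Rpower_O; lra. }
  assert (HP : 0 < P) by apply Rpower_pos.
  assert (H2 : (P - 1) * x <= b * P * (1 - x)).
  { assert (P * (1 - x * Q) <= P * ((1 + b) * 1 * (1 - x))) by (apply Rmult_le_compat_l; lra).
    nra. }
  rewrite Rpower_split by lra. fold P.
  assert (HX : 0 < x ^ M) by (apply pow_lt; lra).
  simpl. replace ((P - 1) * (x * x ^ M) / (1 - x)) with (((P - 1) * x) * x ^ M / (1 - x)) by (field; lra).
  replace (b * (P * x ^ M)) with ((b * P * (1 - x)) * x ^ M / (1 - x)) by (field; lra).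
  unfold Rdiv. apply Rmult_le_compat_r. left; apply Rinv_0_lt_compat; lra.
  apply Rmult_le_compat_r; lra.
Qed.

Lemma B_tail b k : 0 < b < 1 -> (forall n, (1 <= k n)%nat) ->
  is_lim_seq (fun n => INR (k n) / INR n) 0 ->
  forall eps, 0 < eps -> exists M, eventually (fun n => EB b k n <= sum_n (Bn b k n) M + eps).
Proof.
  intros Hb Hk Hl eps Heps.
  destruct (nat_above (b / eps)) as [M HM]. exists M.
  assert (Hinv : b * / (INR M + 1 - b) <= eps).
  { assert (0 < b / eps) by (apply Rdiv_lt_0_compat; lra).
    apply Rmult_le_reg_r with (INR M + 1 - b). lra.
    rewrite Rmult_assoc, Rinv_l by lra.
    assert (b <= eps * INR M).
    { apply Rmult_le_reg_l with (/ eps). apply Rinv_0_lt_compat; lra.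
      rewrite <- Rmult_assoc, Rinv_l by lra. unfold Rdiv in HM. lra. }
    nra. }
  destruct (ev_k k Hl) as [N HN]. exists N. intros n Hn. specialize (HN n Hn).
  assert (Htail := tail_eq (Bn b k n) (EB b k n) M (Bn_series b k n Hk)).
  set (T := sum_n_m (fun j => ((Rpower (INR j / INR n) (- b) - 1) * (INR j / INR n) ^ (S M)
                              / (1 - INR j / INR n)) * / INR n) (k n) (n - 1)).
  assert (HT : is_series (fun m => Bn b k n (S M + m)%nat) T).
  { unfold Bn, T.
    apply (series_sum (fun j m => Bterm b (INR j / INR n) (S M + m) * / INR n)).
    intros j Hj. destruct (range_x k n j (Hk n) Hj) as [Hx _].
    apply series_scal_r. apply B_tail_series; auto. }
  assert (E : T = EB b k n - sum_n (Bn b k n) M).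
  { rewrite <- (is_series_unique _ _ HT). apply is_series_unique. exact Htail. }
  assert (HTb : T <= b * / (INR M + 1 - b)).
  { apply Rle_trans with (b * RSf (fun x => Rpower x ((INR M + 1 - b) - 1)) (k n) n).
    - unfold T, RSf. rewrite <- sum_scal. apply sum_le_loc. intros j Hj.
      destruct (range_x k n j (Hk n) Hj) as [Hx Hn0].
      replace (INR M + 1 - b - 1) with (INR M - b) by ring.
      rewrite <- Rmult_assoc. apply Rmult_le_compat_r. lra.
      apply B_tail_ineq; auto.
    - apply Rmult_le_compat_l. lra.
      assert (0 <= INR M) by apply pos_INR.
      destruct (RS_bounds (INR M + 1 - b) (k n) n ltac:(lra) (Hk n) ltac:(lia)) as [_ [_ B3]].
      exact B3. }
  lra.
Qed.

Lemma D_lim (k : nat -> nat) : (forall n, (1 <= k n)%nat) ->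
  is_lim_seq (fun n => INR (k n) / INR n) 0 ->
  is_lim_seq (fun n => sum_n_m (fun j => / INR (n - j)) 0 (k n - 1)) 0.
Proof.
  intros Hk Hl.
  apply is_lim_seq_le_le_loc with (u := fun _ => 0) (w := fun n => 2 * (INR (k n) / INR n)).
  - destruct (ev_k k Hl) as [N HN]. exists N. intros n Hn. specialize (HN n Hn).
    specialize (Hk n).
    assert (Hn0 : 0 < INR n) by (apply lt_0_INR; lia).
    split.
    + apply sum_nonneg. intros j Hj. left. apply Rinv_0_lt_compat, lt_0_INR. lia.
    + apply Rle_trans with (sum_n_m (fun _ => 2 / INR n) 0 (k n - 1)).
      * apply sum_le_loc. intros j Hj.
        assert (INR n <= INR (2 * (n - j))) by (apply le_INR; lia).
        rewrite mult_INR in H. simpl in H.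
        assert (0 < INR (n - j)) by (apply lt_0_INR; lia).
        unfold Rdiv. rewrite <- (Rinv_inv 2). rewrite <- Rinv_mult.
        apply Rinv_le_contravar. apply Rmult_lt_0_compat; lra. lra.
      * rewrite sum_n_m_const. replace (S (k n - 1) - 0)%nat with (k n) by lia.
        apply Req_le. Req. field. lra.
  - apply is_lim_seq_const.
  - replace (Finite 0) with (Rbar_mult 2 0) by (simpl; f_equal; ring).
    apply is_lim_seq_scal_l. exact Hl.
Qed.

Lemma decomp gamma k n : (1 <= k)%nat -> (2 * k <= n)%nat ->
  harmonic n - tail_sum gamma k n =
  sum_n_m (fun j => / INR (n - j)) 0 (k - 1) +
  (EA (gamma - 2) (fun _ => k) n - EB (gamma - 2) (fun _ => k) n).
Proof.
  intros Hk Hn. set (b := gamma - 2).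
  assert (Hh : harmonic n = sum_n_m (fun j => / INR (n - j)) 0 (n - 1)).
  { replace n with (S (n - 1)) at 1 by lia. rewrite harm_rev.
    replace (S (n - 1)) with n by lia. reflexivity. }
  rewrite Hh.
  rewrite (sum_n_m_Chasles _ 0 (k - 1) (n - 1)) by lia.
  replace (S (k - 1)) with k by lia. change (plus ?u ?v) with (u + v).
  unfold tail_sum, EA, EB.
  assert (E : sum_n_m (fun j => / INR (n - j)) k (n - 1) -
     sum_n_m (fun i => phi (INR i / INR n) * Rpower (INR n / INR i) gamma * / INR n) k (n - 1)
     = sum_n_m (fun j => SAv b (INR j / INR n) * / INR n) k (n - 1) - sum_n_m (fun j => SBv b (INR j / INR n) * / INR n) k (n - 1)).
  { rewrite <- !sum_minus. apply sum_ext_loc. intros j Hj.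
    destruct (range_x (fun _ => k) n j Hk Hj) as [Hx Hn0].
    assert (0 < INR n) by (apply lt_0_INR; lia).
    assert (0 < INR j) by (apply lt_0_INR; lia).
    assert (Ex : INR n / INR j = / (INR j / INR n)) by (field; lra).
    rewrite Ex. replace gamma with (b + 2) by (unfold b; ring).
    assert (K := key_identity b (INR j / INR n) Hx).
    transitivity ((/ (1 - INR j / INR n) - phi (INR j / INR n) * Rpower (/ (INR j / INR n)) (b + 2)) * / INR n).
    2: { rewrite K. unfold SAv, SBv. Req; ring. }
    rewrite minus_INR by lia.
    assert (INR j < INR n) by (apply lt_INR; lia).
    Req. field. split; lra. }
  Req. lra.
Qed.

Theorem lemma2p1 (gamma : R) (k : nat -> nat) :
  2 < gamma < 3 ->
  (forall n, (1 <= k n)%nat) ->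
  is_lim_seq (fun n => INR (k n) / INR n) 0 ->
  exists L : R,
    is_series (fun i => limit_term gamma (Datatypes.S i)) L /\
    is_lim_seq (fun n => harmonic n - tail_sum gamma (k n) n) L.
Proof.
  intros Hg Hk Hl.
  set (b := gamma - 2). assert (Hb : 0 < b < 1) by (unfold b; lra).
  set (Al := fun m : nat => / (INR m + 1 - b) * / (INR m + 2)).
  set (Bl := fun m : nat => / (INR m + 1 - b) - / (INR m + 1)).
  destruct (tannery (An b k) Al (EA b k)
              (fun n m => An_nonneg b k n m Hk) (fun n => An_series b k n Hk)
              (fun m => An_lim b k m Hb Hk Hl) (A_tail b k Hb Hk Hl)) as [HAex HAlim].
  destruct (tannery (Bn b k) Bl (EB b k)
              (fun n m => Bn_nonneg b k n m (proj1 Hb) Hk) (fun n => Bn_series b k n Hk)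
              (fun m => Bn_lim b k m Hb Hk Hl) (B_tail b k Hb Hk Hl)) as [HBex HBlim].
  exists (Series Al - Series Bl). split.
  - assert (HS := is_series_minus _ _ _ _ (Series_correct _ HAex) (Series_correct _ HBex)).
    apply is_series_eq with (3 := HS).
    + intro m. change (plus ?u ?v) with (u + v). change (opp ?u) with (- u).
      unfold Al, Bl, limit_term. rewrite S_INR.
      assert (0 <= INR m) by apply pos_INR.
      replace gamma with (b + 2) by (unfold b; ring).
      Req. field. repeat split; lra.
    + change (plus ?u ?v) with (u + v). change (opp ?u) with (- u). Req. ring.
  - apply is_lim_seq_ext_loc with
      (fun n => sum_n_m (fun j => / INR (n - j)) 0 (k n - 1) + (EA b k n - EB b k n)).
    + destruct (ev_k k Hl) as [N HN]. exists N. intros n Hn.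
      rewrite (decomp gamma (k n) n (Hk n) (HN n Hn)). reflexivity.
    + replace (Finite (Series Al - Series Bl)) with (Finite (0 + (Series Al - Series Bl)))
        by (f_equal; ring).
      apply is_lim_seq_plus'. apply D_lim; auto.
      apply is_lim_seq_minus'; auto.
Qed.
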